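(* Let $d\ge3$, $\beta>0$, $g:\mathbb{R}^d\to\mathbb{R}$ Lipschitz. There are positive constants $C_1,C_2$ depending only on $d,\beta,g$ such that for any $\varepsilon>0$, $s,t\in\mathbb{Z}_{\ge0}$ and $x\in\mathbb{Z}^d$, \[ |G_\varepsilon(s,x)-G_\varepsilon(t,x)|\le C_1\varepsilon|t-s|^{1/2}e^{C_2(\varepsilon|x|+\varepsilon^2s+\varepsilon^2t)}. \]
   Context: $\{S_n\}_{n\ge0}$ is simple symmetric random walk on $\mathbb{Z}^d$ started at the origin; $g_\varepsilon(x)=g(\varepsilon x)$ and $G_\varepsilon(t,x)=\mathbb{E}(e^{\beta g_\varepsilon(S_t+x)})$ for $t\in\mathbb{Z}_{\ge0}$, $x\in\mathbb{Z}^d$. *)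

(* Defs.v *)
From mathcomp Require Import all_boot all_order all_algebra.
From mathcomp Require Import all_classical all_reals all_analysis.
Set Implicit Arguments. Unset Strict Implicit. Unset Printing Implicit Defensive.
Import Order.TTheory GRing.Theory Num.Theory.
Local Open Scope ring_scope.

Definition enorm (R : realType) (d : nat) (u : 'I_d -> R) : R :=
  Num.sqrt (\sum_(i < d) u i ^+ 2).

Definition lipschitz_Rd (R : realType) (d : nat) (g : ('I_d -> R) -> R) : Prop :=
  exists L : R, forall u v : 'I_d -> R,
    `|g u - g v| <= L * enorm (fun i => u i - v i).

Definition step_vec (d : nat) (st : 'I_d * bool) : 'I_d -> int :=
  fun j => if j == st.1 then (if st.2 then 1 else -1) else 0.

Definition walk_pos (d t : nat) (w : {ffun 'I_t -> 'I_d * bool}) : 'I_d -> int :=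
  fun j => \sum_(k < t) step_vec (w k) j.

(* G_eps(t,x) = E[ exp(beta * g(eps (S_t + x))) ], where S is simple symmetric
   random walk on Z^d started at 0: every one of the (2d)^t step sequences of
   length t is equally likely. *)
Definition G_eps (R : realType) (d : nat) (beta : R) (g : ('I_d -> R) -> R)
    (eps : R) (t : nat) (x : 'I_d -> int) : R :=
  ((2 * d) ^ t)%:R^-1 *
  \sum_(w : {ffun 'I_t -> 'I_d * bool})
     expR (beta * g (fun j => eps * ((walk_pos w j + x j)%:~R))).

Definition znorm (R : realType) (d : nat) (x : 'I_d -> int) : R :=
  enorm (fun i => (x i)%:~R : R).

(* Main.v *)
Set Warnings "-all".
Require Import Defs.
From mathcomp Require Import all_boot all_order all_algebra.
From mathcomp Require Import all_classical all_reals all_analysis.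
From mathcomp Require Import ring lra.
Import Order.TTheory GRing.Theory Num.Theory.
Local Open Scope ring_scope.

Section Real.
Variable R : realType.
Definition chr (u : R) : R := (expR u + expR (- u)) / 2.

Lemma le_expR_self (u : R) : u <= expR u.
Proof. have := expR_ge1Dx u; lra. Qed.

Lemma expR_abs_le_chr (u : R) : expR `|u| <= 2 * chr u.
Proof.
rewrite /chr; have h1 := expR_gt0 u; have h2 := expR_gt0 (- u).
by case: (lerP 0 u) => h; [rewrite ger0_norm | rewrite ltr0_norm]; lra.
Qed.

Lemma chr_le_expR_abs (u : R) : chr u <= expR `|u|.
Proof.
rewrite /chr.
have h1 : expR u <= expR `|u| by rewrite ler_expR ler_norm.
have h2 : expR (- u) <= expR `|u| by rewrite ler_expR -normrN ler_norm.
lra.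
Qed.

Lemma chr_even (u : R) : chr (- u) = chr u.
Proof. by rewrite /chr opprK addrC. Qed.

Lemma chr_le_pos (u : R) : 0 <= u -> chr u <= expR (2 * u ^+ 2).
Proof.
move=> u0; case: (lerP (1/2) u) => hu.
  apply: le_trans (chr_le_expR_abs u) _; rewrite ger0_norm // ler_expR; nra.
have e1 := expR_ge1Dx u; have e2 := expR_ge1Dx (- u).
have e3 := expR_ge1Dx (2 * u ^+ 2).
have p1 := expR_gt0 u; have p2 := expR_gt0 (- u).
have m := expRxMexpNx_1 u.
set E := expR u in e1 p1 m *; set E' := expR (- u) in e2 p2 m *.
have h1 : E * (1 - u) <= 1 by nra.
have h2 : E' * (1 + u) <= 1 by nra.
have h3 : E <= 1 + u + 2 * u ^+ 2.
  have q : 1 <= (1 - u) * (1 + u + 2 * u ^+ 2) by nra.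
  have r1 : E <= E * ((1 - u) * (1 + u + 2 * u ^+ 2)) by rewrite ler_peMr // ltW.
  have r2 : E * (1 - u) * (1 + u + 2 * u ^+ 2) <= 1 * (1 + u + 2 * u ^+ 2)
    by apply: ler_wpM2r => //; have := sqr_ge0 u; lra.
  rewrite mulrA in r1; lra.
have h4 : E' <= 1 - u + u ^+ 2.
  have u3 : 0 <= u * u ^+ 2 by rewrite mulr_ge0 // sqr_ge0.
  have q : 1 <= (1 + u) * (1 - u + u ^+ 2).
    have -> : (1 + u) * (1 - u + u ^+ 2) = 1 + u * u ^+ 2 by ring.
    lra.
  have r1 : E' <= E' * ((1 + u) * (1 - u + u ^+ 2)) by rewrite ler_peMr // ltW.
  have r2 : E' * (1 + u) * (1 - u + u ^+ 2) <= 1 * (1 - u + u ^+ 2)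
    by apply: ler_wpM2r => //; have := sqr_ge0 u; lra.
  rewrite mulrA in r1; lra.
rewrite /chr -/E -/E'; have := sqr_ge0 u; lra.
Qed.

Lemma chr_le (u : R) : chr u <= expR (2 * u ^+ 2).
Proof.
case: (lerP 0 u) => h; first exact: chr_le_pos.
rewrite -chr_even -sqrrN; apply: chr_le_pos; lra.
Qed.

Lemma expR_diff (A B : R) :
  `|expR A - expR B| <= `|A - B| * expR `|A - B| * expR B.
Proof.
have -> : expR A = expR (A - B) * expR B by rewrite -expRD subrK.
set v := A - B.
have pB := expR_gt0 B.
rewrite -{2}(mul1r (expR B)) -mulrBl normrM (gtr0_norm pB) ler_wpM2r ?(ltW pB) //.
have e1 := expR_ge1Dx v; have e2 := expR_ge1Dx (- v).
have m := expRxMexpNx_1 v.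
case: (lerP 0 v) => hv.
  rewrite (ger0_norm hv) ger0_norm; last lra.
  have p := expR_gt0 v.
  have h : expR v * (1 - v) <= 1 by rewrite -m ler_wpM2l ?(ltW p) //; lra.
  have : 1 <= expR v by rewrite -(expR0 R) ler_expR.
  nra.
have lt1 : expR v < 1 by rewrite -(expR0 R) ltr_expR.
rewrite (ltr0_norm hv) ltr0_norm; last lra.
have : 1 <= expR (- v) by rewrite -(expR0 R) ler_expR; lra.
nra.
Qed.

Lemma chr_add (u v : R) : chr (u + v) + chr (u - v) = 2 * chr u * chr v.
Proof.
rewrite /chr !opprD !expRD !opprK.
rewrite -!mulrDl.
by field.
Qed.

End Real.
Arguments chr {R}.

Section S.
Variable R : realType.
Variable d : nat.

Definition Ew (t : nat) (F : ('I_d -> int) -> R) : R :=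
  ((2 * d) ^ t)%:R^-1 * \sum_(w : {ffun 'I_t -> 'I_d * bool}) F (walk_pos w).

Definition vadd (y z : 'I_d -> int) : 'I_d -> int := fun j => y j + z j.

Definition fcons' (t : nat) (p : ('I_d * bool) * {ffun 'I_t -> 'I_d * bool})
  : {ffun 'I_t.+1 -> 'I_d * bool} :=
  [ffun i => match unlift ord0 i with None => p.1 | Some j => p.2 j end].

Arguments fcons' {t}.
Definition fsplit' (t : nat) (f : {ffun 'I_t.+1 -> 'I_d * bool}) :=
  (f ord0, [ffun j => f (lift ord0 j)]).

Lemma sum_ffunS (t : nat) (F : {ffun 'I_t.+1 -> 'I_d * bool} -> R) :
  \sum_(w : {ffun 'I_t.+1 -> 'I_d * bool}) F w =
  \sum_(a : 'I_d * bool) \sum_(w : {ffun 'I_t -> 'I_d * bool}) F (fcons' (a, w)).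
Proof.
rewrite pair_big /=.
rewrite (reindex (@fcons' t)) /=; last first.
  exists (@fsplit' t) => [[a w] _|f _].
    rewrite /fsplit' /fcons' /= ffunE unlift_none; congr pair.
    by apply/ffunP => j; rewrite !ffunE liftK.
  apply/ffunP => i; rewrite /fsplit' /fcons' ffunE /=.
  by case: unliftP => [j ->|->]; rewrite ?ffunE.
by apply: eq_bigr => -[a w] _.
Qed.

Lemma walk_pos_cons t a w :
  walk_pos (@fcons' t (a, w)) = vadd (step_vec a) (walk_pos w).
Proof.
apply: funext => j; rewrite /walk_pos /vadd big_ord_recl /= ffunE unlift_none.
congr (_ + _); apply: eq_bigr => k _; by rewrite ffunE liftK.
Qed.

Lemma Ew_S t F : Ew t.+1 F =
  (2 * d)%:R^-1 * \sum_(st : 'I_d * bool) Ew t (fun z => F (vadd (step_vec st) z)).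
Proof.
rewrite /Ew sum_ffunS expnS natrM invfM -mulrA; congr (_ * _).
rewrite mulr_sumr; apply: eq_bigr => a _; congr (_ * _).
by apply: eq_bigr => w _; rewrite walk_pos_cons.
Qed.


Lemma Ew_le t F F' : (forall z, F z <= F' z) -> Ew t F <= Ew t F'.
Proof.
move=> H; rewrite /Ew ler_wpM2l ?invr_ge0 ?ler0n //.
by apply: ler_sum => w _; apply: H.
Qed.

Lemma Ew_abs t F : `|Ew t F| <= Ew t (fun z => `|F z|).
Proof.
rewrite /Ew normrM ger0_norm ?invr_ge0 ?ler0n // ler_wpM2l ?invr_ge0 ?ler0n //.
exact: ler_norm_sum.
Qed.

Lemma Ew_B t F F' : Ew t (fun z => F z - F' z) = Ew t F - Ew t F'.
Proof. by rewrite /Ew sumrB mulrBr. Qed.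

Lemma Ew_Mc t c F : Ew t (fun z => c * F z) = c * Ew t F.
Proof. by rewrite /Ew -mulr_sumr mulrCA. Qed.

Lemma Ew_const t c : (0 < d)%N -> Ew t (fun _ => c) = c.
Proof.
move=> d0; rewrite /Ew sumr_const card_ffun card_prod card_ord card_ord card_bool.
rewrite -[c *+ _]mulr_natr mulrCA (mulnC d 2) mulVf ?mulr1 //.
by rewrite pnatr_eq0 -lt0n expn_gt0 muln_gt0 d0.
Qed.


Definition Phi (a : R) (y : 'I_d -> int) : R := \prod_(i < d) chr (a * (y i)%:~R).

Lemma PPhi a y : (0 < d)%N ->
  (2 * d)%:R^-1 * \sum_(st : 'I_d * bool) Phi a (vadd (step_vec st) y) = chr a * Phi a y.
Proof.
move=> d0.
have -> : \sum_(st : 'I_d * bool) Phi a (vadd (step_vec st) y) =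
   \sum_(i < d) \sum_(b : bool) Phi a (vadd (step_vec (i, b)) y).
  by rewrite pair_big; apply: eq_bigr => -[i b].
have H : forall i : 'I_d, \sum_(b : bool) Phi a (vadd (step_vec (i, b)) y) = 2 * chr a * Phi a y.
  move=> i; rewrite big_bool /= /Phi (bigD1 i) //= [in X in _ + X](bigD1 i) //=.
  rewrite [in X in _ = X](bigD1 i) //=.
  have E : forall b, \prod_(j < d | j != i) chr (a * (vadd (step_vec (i, b)) y j)%:~R)
         = \prod_(j < d | j != i) chr (a * (y j)%:~R).
    move=> b; apply: eq_bigr => j /negPf ji.
    by rewrite /vadd /step_vec /= ji add0r.
  rewrite (E true) (E false) /vadd /step_vec /= eqxx -mulrDl.
  rewrite mulrA; congr (_ * _).
  have -> : a * (1 + y i)%:~R = a * (y i)%:~R + a by rewrite intrD; ring.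
  have -> : a * (-1 + y i)%:~R = a * (y i)%:~R - a by rewrite intrD; ring.
  by rewrite chr_add mulrAC.
rewrite (eq_bigr _ (fun i _ => H i)) sumr_const card_ord.
rewrite -(mulr_natr (2 * chr a * Phi a y) d) natrM.
have dn0 : (d%:R : R) != 0 by rewrite pnatr_eq0 -lt0n d0.
by field.
Qed.

Lemma EPhi n a y : (0 < d)%N ->
  Ew n (fun z => Phi a (vadd y z)) = chr a ^+ n * Phi a y.
Proof.
move=> d0; elim: n y => [|n IH] y.
  rewrite /Ew expn0 invr1 mul1r expr0 mul1r.
  under eq_bigr => w _ do have -> : vadd y (walk_pos w) = y by apply: funext => j; rewrite /vadd /walk_pos big_ord0 addr0.
  by rewrite sumr_const card_ffun card_ord expn0.
rewrite Ew_S.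
transitivity ((2 * d)%:R^-1 * \sum_(st : 'I_d * bool) (chr a ^+ n * Phi a (vadd (step_vec st) y))).
  congr (_ * _); apply: eq_bigr => st _; rewrite -IH; congr Ew; apply: funext => z.
  by congr Phi; apply: funext => j; rewrite /vadd addrA (addrC (y j)).
by rewrite -mulr_sumr mulrCA PPhi // exprS; ring.
Qed.


Lemma Ew0 F : Ew 0 F = F (fun _ => 0).
Proof.
rewrite /Ew expn0 invr1 mul1r.
under eq_bigr => w _ do have -> : walk_pos w = (fun _ => 0) by apply: funext => j; rewrite /walk_pos big_ord0.
by rewrite sumr_const card_ffun card_ord expn0.
Qed.

Lemma chr0 : chr (0 : R) = 1.
Proof. by rewrite /chr oppr0 expR0; field. Qed.

Lemma EPhi0 n b : (0 < d)%N -> Ew n (Phi b) = chr b ^+ n.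
Proof.
move=> d0; have := EPhi n b (fun _ => 0) d0.
have -> : Phi b (fun _ => 0) = 1.
  by rewrite /Phi big1 // => i _; rewrite mulr0 chr0.
rewrite mulr1 => <-; congr Ew; apply: funext => z; congr Phi.
by apply: funext => j; rewrite /vadd add0r.
Qed.

Lemma expR_sum (f : 'I_d -> R) : expR (\sum_i f i) = \prod_i expR (f i).
Proof. exact: (big_morph _ (@expRD R) (expR0 R)). Qed.

Definition l1 (z : 'I_d -> int) : R := \sum_(i < d) `|(z i)%:~R : R|.

Lemma l1_ge0 z : 0 <= l1 z.
Proof. by apply: sumr_ge0 => i _. Qed.

Lemma expR_l1_le c z : 0 <= c -> expR (c * l1 z) <= 2 ^+ d * Phi c z.
Proof.
move=> c0; rewrite /l1 mulr_sumr expR_sum /Phi.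
have -> : (2 : R) ^+ d = 2 ^+ #|'I_d| by rewrite card_ord.
rewrite -prodrMl; apply: ler_prod => i _.
rewrite expR_ge0 /= -(ger0_norm c0) -normrM (ger0_norm c0).
exact: expR_abs_le_chr.
Qed.

Lemma enorm_le_l1 (u : 'I_d -> R) : enorm u <= \sum_i `|u i|.
Proof.
have S0 : 0 <= \sum_i `|u i| by apply: sumr_ge0 => i _.
rewrite /enorm -(ger0_norm S0) -sqrtr_sqr ler_sqrt ?sqr_ge0 //.
rewrite expr2 mulr_suml; apply: ler_sum => i _.
rewrite -(real_normK (num_real (u i))) expr2 ler_wpM2l //.
by rewrite (bigD1 i) //= lerDl; apply: sumr_ge0 => j _.
Qed.

Lemma coord_le_enorm (u : 'I_d -> R) i : `|u i| <= enorm u.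
Proof.
rewrite /enorm -sqrtr_sqr ler_sqrt; last by apply: sumr_ge0 => j _; rewrite sqr_ge0.
by rewrite (bigD1 i) //= lerDl; apply: sumr_ge0 => j _; rewrite sqr_ge0.
Qed.

Lemma Phi_le_znorm a x : 0 <= a -> Phi a x <= expR (d%:R * a * znorm R x).
Proof.
move=> a0; rewrite -mulrA expRM_natl /Phi.
have -> : expR (a * znorm R x) ^+ d = \prod_(i < d) expR (a * znorm R x).
  by rewrite prodr_const card_ord.
apply: ler_prod => i _; apply/andP; split.
  rewrite /chr; apply: divr_ge0 => //; apply: addr_ge0; exact: expR_ge0.
apply: le_trans (chr_le_expR_abs _ _) _; rewrite ler_expR normrM (ger0_norm a0).
by rewrite ler_wpM2l //; apply: (coord_le_enorm (fun i => (x i)%:~R)).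
Qed.

Lemma chr_ge0 (u : R) : 0 <= chr u.
Proof. by rewrite /chr; apply: divr_ge0 => //; apply: addr_ge0; exact: expR_ge0. Qed.

Lemma Phi_ge0 a y : 0 <= Phi a y.
Proof. by apply: prodr_ge0 => i _; exact: chr_ge0. Qed.

Lemma chr_pow_le (b : R) (n : nat) : chr b ^+ n <= expR (2 * b ^+ 2 * n%:R).
Proof.
rewrite expRM_natr; apply: lerXn2r; rewrite ?nnegrE ?chr_ge0 ?expR_ge0 //.
exact: chr_le.
Qed.

Lemma Ew_S_shift t y (hh : ('I_d -> int) -> R) :
  Ew t.+1 (fun z => hh (vadd z y)) =
  (2 * d)%:R^-1 * \sum_(st : 'I_d * bool) Ew t (fun z => hh (vadd z (vadd (step_vec st) y))).
Proof.
rewrite Ew_S; congr (_ * _); apply: eq_bigr => st _; congr Ew; apply: funext => z.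
by congr hh; apply: funext => j; rewrite /vadd -addrA addrCA.
Qed.

Lemma main_bound (beta L eps : R) (g : ('I_d -> R) -> R) (n s : nat) (x : 'I_d -> int) :
  (0 < d)%N -> 0 < beta -> 0 < L -> 0 < eps -> (0 < n)%N ->
  (forall u v, `|g u - g v| <= L * enorm (fun i => u i - v i)) ->
  `|G_eps beta g eps (s + n) x - G_eps beta g eps s x| <=
    (beta * L * eps) * Num.sqrt n%:R * (2 ^+ d * 2 ^+ d) * expR (beta * g (fun _ => 0))
    * expR (4 * (beta * L * eps) ^+ 2 * n%:R + 4) * expR (2 * (beta * L * eps) ^+ 2 * s%:R)
    * expR (d%:R * (beta * L * eps) * znorm R x).
Proof.
move=> d0 b0 L0 e0 n0 hL.
set a := beta * L * eps.
have a0 : 0 < a by rewrite /a !mulr_gt0.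
pose h (y : 'I_d -> int) := expR (beta * g (fun j => eps * (y j)%:~R)).
have GE : forall t y, G_eps beta g eps t y = Ew t (fun z => h (vadd z y)) by [].
set g0 := g (fun _ => 0).
have hb : forall y, h y <= expR (beta * g0) * 2 ^+ d * Phi a y.
  move=> y; rewrite -mulrA.
  apply: le_trans (ler_wpM2l (expR_ge0 _) (expR_l1_le a y (ltW a0))).
  rewrite -expRD ler_expR.
  have H : g (fun j => eps * (y j)%:~R) - g0 <= L * (eps * l1 y).
    apply: le_trans (ler_norm _) _; apply: le_trans (hL _ _) _.
    rewrite ler_wpM2l ?(ltW L0) //; apply: le_trans (enorm_le_l1 _) _.
    rewrite /l1 mulr_sumr; apply: ler_sum => i _; by rewrite subr0 normrM gtr0_norm.
  have := ler_wpM2l (ltW b0) H; rewrite /a; nra.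
have hd : forall y z, `|h (vadd z y) - h y| <= a * l1 z * expR (a * l1 z) * h y.
  move=> y z; apply: le_trans (expR_diff _ _ _) _.
  have H : `|beta * g (fun j => eps * (vadd z y j)%:~R) - beta * g (fun j => eps * (y j)%:~R)| <= a * l1 z.
    rewrite -mulrBr normrM gtr0_norm // /a -!mulrA ler_wpM2l ?(ltW b0) //.
    apply: le_trans (hL _ _) _; rewrite ler_wpM2l ?(ltW L0) //; apply: le_trans (enorm_le_l1 _) _.
    rewrite /l1 mulr_sumr; apply: ler_sum => i _.
    by rewrite /vadd intrD -mulrBr addrK normrM gtr0_norm.
  rewrite ler_wpM2r ?expR_ge0 //.
  by apply: ler_pM; [exact: normr_ge0 | exact: expR_ge0 | exact: H | rewrite ler_expR].
set sn := Num.sqrt n%:R.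
have sn0 : 0 < sn by rewrite sqrtr_gt0 ltr0n.
set K := a * sn * 2 ^+ d * expR (4 * a ^+ 2 * n%:R + 4) * (expR (beta * g0) * 2 ^+ d).
have hy0 : forall y, 0 <= h y by move=> y; exact: expR_ge0.
have D0 : forall y, `|Ew n (fun z => h (vadd z y)) - h y| <= K * Phi a y.
  move=> y.
  have -> : Ew n (fun z => h (vadd z y)) - h y = Ew n (fun z => h (vadd z y) - h y).
    by rewrite Ew_B Ew_const.
  apply: le_trans (Ew_abs n (fun z => h (vadd z y) - h y)) _.
  apply: le_trans (@Ew_le n (fun z => `|h (vadd z y) - h y|)
     (fun z => a * l1 z * expR (a * l1 z) * h y) (hd y)) _.
  set b := a + sn^-1.
  have step : forall z, a * l1 z * expR (a * l1 z) * h y <= (a * h y * sn * 2 ^+ d) * Phi b z.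
    move=> z.
    have e1 : l1 z <= sn * expR (l1 z / sn).
      rewrite {1}(_ : l1 z = sn * (l1 z / sn)); last by field; rewrite gt_eqF.
      by rewrite ler_wpM2l ?(ltW sn0) // le_expR_self.
    have e2 : expR (a * l1 z) * expR (l1 z / sn) = expR (b * l1 z).
      by rewrite -expRD /b; congr expR; ring.
    have isn0 : 0 < sn^-1 by rewrite invr_gt0.
    have e3 := expR_l1_le b z (addr_ge0 (ltW a0) (ltW isn0)).
    have l0 := l1_ge0 z.
    have pe := expR_gt0 (a * l1 z).
    apply: (le_trans (y := a * h y * (sn * expR (l1 z / sn)) * expR (a * l1 z))).
      have -> : a * l1 z * expR (a * l1 z) * h y = a * h y * l1 z * expR (a * l1 z) by ring.
      by rewrite ler_wpM2r ?(ltW pe) // ler_wpM2l // (mulr_ge0 (ltW a0) (hy0 y)).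
    have -> : a * h y * (sn * expR (l1 z / sn)) * expR (a * l1 z) = (a * h y * sn) * expR (b * l1 z).
      by rewrite -e2; ring.
    by rewrite -(mulrA _ (2 ^+ d)) ler_wpM2l // (mulr_ge0 (mulr_ge0 (ltW a0) (hy0 y)) (ltW sn0)).
  apply: le_trans (@Ew_le n (fun z => a * l1 z * expR (a * l1 z) * h y)
     (fun z => (a * h y * sn * 2 ^+ d) * Phi b z) step) _.
  rewrite Ew_Mc EPhi0 //.
  have cb : chr b ^+ n <= expR (4 * a ^+ 2 * n%:R + 4).
    apply: le_trans (chr_pow_le b n) _; rewrite ler_expR.
    have nq : n%:R * sn^-1 ^+ 2 = 1.
      by rewrite exprVn sqr_sqrtr ?ler0n // mulfV // pnatr_eq0 -lt0n.
    have := mulr_ge0 (ler0n R n) (sqr_ge0 (a - sn^-1)).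
    rewrite /b; nra.
  have -> : a * h y * sn * 2 ^+ d * chr b ^+ n = (a * sn * 2 ^+ d) * (h y * chr b ^+ n) by ring.
  have -> : K * Phi a y = (a * sn * 2 ^+ d) * ((expR (beta * g0) * 2 ^+ d * Phi a y) * expR (4 * a ^+ 2 * n%:R + 4)).
    by rewrite /K; ring.
  have p2 : 0 <= (2 : R) ^+ d by rewrite exprn_ge0.
  rewrite ler_wpM2l //; first exact: (mulr_ge0 (mulr_ge0 (ltW a0) (ltW sn0)) p2).
  exact: ler_pM (hy0 y) (exprn_ge0 _ (chr_ge0 _)) (hb y) cb.
have IND : forall s y, `|Ew (s + n) (fun z => h (vadd z y)) - Ew s (fun z => h (vadd z y))|
    <= K * chr a ^+ s * Phi a y.
  elim=> [|s' IH] y.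
    rewrite add0n Ew0 expr0 mulr1.
    have -> : vadd (fun _ => 0) y = y by apply: funext => j; rewrite /vadd add0r.
    exact: D0.
  rewrite addSn !Ew_S_shift -mulrBr -sumrB normrM ger0_norm ?invr_ge0 ?ler0n //.
  apply: le_trans (ler_wpM2l _ (ler_norm_sum _ _ _)) _; first by rewrite invr_ge0 ler0n.
  apply: le_trans (ler_wpM2l _ (ler_sum _ (fun st _ => IH (vadd (step_vec st) y)))) _.
    by rewrite invr_ge0 ler0n.
  rewrite -mulr_sumr mulrCA PPhi //.
  rewrite le_eqVlt; apply/orP; left; apply/eqP; rewrite exprS; ring.
rewrite !GE.
apply: le_trans (IND s x) _.
have c1 := chr_pow_le a s.
have c2 := Phi_le_znorm a x (ltW a0).
have -> : K * chr a ^+ s * Phi a x = (a * sn * (2 ^+ d * 2 ^+ d) * expR (beta * g0)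
   * expR (4 * a ^+ 2 * n%:R + 4)) * (chr a ^+ s * Phi a x) by rewrite /K; ring.
rewrite -[X in _ <= X]mulrA.
have p2 : 0 <= (2 : R) ^+ d by rewrite exprn_ge0.
rewrite ler_wpM2l //.
  apply: mulr_ge0; last exact: expR_ge0.
  apply: mulr_ge0; last exact: expR_ge0.
  exact: (mulr_ge0 (mulr_ge0 (ltW a0) (ltW sn0)) (mulr_ge0 p2 p2)).
exact: ler_pM (exprn_ge0 _ (chr_ge0 _)) (Phi_ge0 _ _) c1 c2.
Qed.
End S.

Theorem lemma5p3 (R : realType) (d : nat) (beta : R) (g : ('I_d -> R) -> R) :
  (3 <= d)%N -> 0 < beta -> lipschitz_Rd g ->
  exists C1 C2 : R, 0 < C1 /\ 0 < C2 /\
    forall (eps : R) (s t : nat) (x : 'I_d -> int), 0 < eps ->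
      `|G_eps beta g eps s x - G_eps beta g eps t x|
        <= C1 * eps * Num.sqrt `|t%:R - s%:R|
           * expR (C2 * (eps * znorm R x + eps ^+ 2 * s%:R + eps ^+ 2 * t%:R)).
Proof.
move=> d3 b0 [L hL].
have d0 : (0 < d)%N by apply: leq_trans d3.
set L' := `|L| + 1.
have L0 : 0 < L' by rewrite /L'; have := normr_ge0 L; lra.
have hL' : forall u v, `|g u - g v| <= L' * enorm (fun i => u i - v i).
  move=> u v; apply: le_trans (hL u v) _; rewrite ler_wpM2r ?sqrtr_ge0 //.
  by rewrite /L'; have := ler_norm L; lra.
set E0 := expR (beta * g (fun _ => 0)).
exists (beta * L' * (2 ^+ d * 2 ^+ d) * E0 * expR 4), (4 * (beta * L') ^+ 2 + beta * L' * d%:R).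
split; first by rewrite !mulr_gt0 // ?exprn_gt0 // expR_gt0.
split; first by rewrite addr_gt0 // !mulr_gt0 // ?exprn_gt0 // ?mulr_gt0 // ltr0n.
move=> eps s t x e0.
wlog st : s t / (s <= t)%N.
  move=> W; case: (leqP s t) => h; first exact: W.
  rewrite distrC (distrC t%:R); apply: le_trans (W t s (ltnW h)) _.
  by rewrite (addrAC _ (eps ^+ 2 * t%:R)).
have tE : t = (s + (t - s))%N by rewrite subnKC.
move: (t - s)%N tE => n ->.
case: (posnP n) => [->|n0].
  rewrite addn0 subrr normr0 /E0.
  by repeat apply: mulr_ge0; rewrite ?expR_ge0 ?exprn_ge0 ?sqrtr_ge0 // ltW.
have := main_bound R d beta L' eps g n s x d0 b0 L0 e0 n0 hL'.
rewrite -/E0 distrC => H; apply: le_trans H _.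
have -> : `|(s + n)%:R - s%:R| = n%:R :> R by rewrite natrD addrC addKr ger0_norm.
set sn := Num.sqrt n%:R.
set zx := znorm R x.
have zx0 : 0 <= zx by rewrite /zx /znorm /enorm sqrtr_ge0.
have -> : beta * L' * eps * sn * (2 ^+ d * 2 ^+ d) * E0 *
    expR (4 * (beta * L' * eps) ^+ 2 * n%:R + 4) * expR (2 * (beta * L' * eps) ^+ 2 * s%:R) *
    expR (d%:R * (beta * L' * eps) * zx)
  = beta * L' * (2 ^+ d * 2 ^+ d) * E0 * expR 4 * eps * sn *
    expR (4 * (beta * L' * eps) ^+ 2 * n%:R + 2 * (beta * L' * eps) ^+ 2 * s%:R
          + d%:R * (beta * L' * eps) * zx).
  by rewrite !expRD; ring.
have p2 : 0 <= (2 : R) ^+ d by rewrite exprn_ge0.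
have side : 0 <= beta * L' * (2 ^+ d * 2 ^+ d) * E0 * expR 4 * eps * sn.
  apply: mulr_ge0; last exact: sqrtr_ge0.
  apply: mulr_ge0; last exact: ltW.
  apply: mulr_ge0; last exact: expR_ge0.
  apply: mulr_ge0; last exact: expR_ge0.
  apply: mulr_ge0; last exact: mulr_ge0.
  exact: ltW (mulr_gt0 b0 L0).
rewrite ler_wpM2l //.
rewrite ler_expR natrD.
set B := beta * L'.
have B0 : 0 < B by rewrite /B mulr_gt0.
have h1 : 0 <= B ^+ 2 * eps * zx by rewrite !mulr_ge0 // ?ltW // exprn_ge0 // ltW.
have h2 : 0 <= B ^+ 2 * eps ^+ 2 * s%:R by rewrite !mulr_ge0 // ?exprn_ge0 // ltW.
have h3 : 0 <= B * d%:R * eps ^+ 2 * s%:R by rewrite !mulr_ge0 // ?exprn_ge0 // ltW.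
have h4 : 0 <= B * d%:R * eps ^+ 2 * n%:R by rewrite !mulr_ge0 // ?exprn_ge0 // ltW.
have h5 : 0 <= B ^+ 2 * eps ^+ 2 * n%:R by rewrite !mulr_ge0 // ?exprn_ge0 // ltW.
nra.
Qed.
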